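(* Let $d_h,d_b\ge1$, $d=2d_h+d_b+2$, $n\ge1$, and $s_1,\dots,s_n\in\mathbb{Q}^{d_b}$. Let $K^e=(k_1,\dots,k_n)$ and $V^e=(v_1,\dots,v_n)$ with $k_i=[0_{d_h},0_{d_b},0_{d_h},-1,i]$ and $v_i=[0_{d_h},s_i,0_{d_h},0,0]$. Let $t\in\mathbb{N}$ and let $q_t\in\mathbb{Q}^d$ be any vector whose last two coordinates are $t+1$ and $1$. Then $$\mathrm{Att}(q_t,K^e,V^e)=[0_{d_h},s_{\min\{t+1,n\}},0_{d_h},0,0].$$
   Context: Vectors are written as concatenations of blocks $[\cdot,\dots]$; $0_k$ is the zero vector of length $k$. $\mathrm{Att}(q,K,V)=\sum_{i=1}^n\alpha_iv_i$ where $(\alpha_1,\dots,\alpha_n)=\mathrm{hardmax}(f^{att}(q,k_1),\dots,f^{att}(q,k_n))$, with $\mathrm{hardmax}(x)_i=1/r$ if $x_i$ is one of the $r$ coordinates attaining the maximum and $0$ otherwise, and scoring function $f^{att}(q,k)=-|\langle q,k\rangle|$. *)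

(* Defs.v *)
From HB Require Import structures.
From mathcomp Require Import all_boot all_order all_algebra.
Set Implicit Arguments. Unset Strict Implicit. Unset Printing Implicit Defensive.
Import Order.TTheory GRing.Theory Num.Theory.
Local Open Scope ring_scope.

Definition dotv (m : nat) (x y : 'rV[rat]_m) : rat := (x *m y^T) 0 0.

Definition fatt (m : nat) (q k : 'rV[rat]_m) : rat := - `|dotv q k|.

Definition argmax_set (n : nat) (x : 'I_n -> rat) : {set 'I_n} :=
  [set i | [forall j, x j <= x i]].

Definition hardmax (n : nat) (x : 'I_n -> rat) (i : 'I_n) : rat :=
  if i \in argmax_set x then (#|argmax_set x|%:R)^-1 else 0.

Definition Att (m p n : nat) (q : 'rV[rat]_m) (K : 'I_n -> 'rV[rat]_m)
  (V : 'I_n -> 'rV[rat]_p) : 'rV[rat]_p :=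
  \sum_(i < n) hardmax (fun j => fatt q (K j)) i *: V i.

(* block concatenation [a, b, c, x, y] with a,c in Q^dh, b in Q^db, x,y in Q *)
Definition blk5 (dh db : nat) (a : 'rV[rat]_dh) (b : 'rV[rat]_db) (c : 'rV[rat]_dh)
  (x y : rat) : 'rV[rat]_(dh + db + dh + 2) :=
  row_mx (row_mx (row_mx a b) c) (row_mx (x%:M : 'rV[rat]_1) (y%:M : 'rV[rat]_1)).

Lemma idx_min_lt (n : nat) (hn : (0 < n)%N) (t : nat) : ((minn t.+1 n).-1 < n)%N.
Proof.
case: n hn => // n _; rewrite /minn; case: ifP => //= h.
by rewrite -ltnS (leq_trans h).
Qed.

(* the 0-based ordinal of the 1-based index min{t+1, n} *)
Definition idx_min (n : nat) (hn : (0 < n)%N) (t : nat) : 'I_n :=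
  Ordinal (idx_min_lt hn t).

(* Main.v *)
Require Import Defs.
From HB Require Import structures.
From mathcomp Require Import all_boot all_order all_algebra lra zify.
Import Order.TTheory GRing.Theory Num.Theory.
Local Open Scope ring_scope.

Lemma dotv_row (a b c : nat) (x y : 'rV[rat]_a) (u v : 'rV[rat]_b) :
  dotv (row_mx x u) (row_mx y v) = dotv x y + dotv u v.
Proof. by rewrite /dotv tr_row_mx mul_row_col mxE. Qed.

Lemma dotv_scal (x y : rat) : dotv (x%:M : 'rV_1) (y%:M) = x * y.
Proof. by rewrite /dotv tr_scalar_mx mul_scalar_mx scale_scalar_mx mxE. Qed.

Lemma dotv0 (m : nat) (x : 'rV[rat]_m) : dotv x 0 = 0.
Proof. by rewrite /dotv trmx0 mulmx0 mxE. Qed.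

Theorem lemma3 (dh db n : nat) (hdh : (1 <= dh)%N) (hdb : (1 <= db)%N)
  (hn : (1 <= n)%N) (s : 'I_n -> 'rV[rat]_db) (t : nat)
  (p : 'rV[rat]_(dh + db + dh)) :
  let K := fun i : 'I_n => blk5 0 (0 : 'rV[rat]_db) (0 : 'rV[rat]_dh) (-1) (i.+1)%:R in
  let V := fun i : 'I_n => blk5 0 (s i) (0 : 'rV[rat]_dh) 0 0 in
  let q := row_mx p (row_mx ((t.+1)%:R%:M : 'rV[rat]_1) (1%:M : 'rV[rat]_1))
    : 'rV[rat]_(dh + db + dh + 2) in
  Att q K V = blk5 0 (s (idx_min hn t)) (0 : 'rV[rat]_dh) 0 0.
Proof.
move=> K V q.
set j0 := idx_min hn t.
have hf : forall j : 'I_n, fatt q (K j) = - `|j%:R - t%:R|.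
  move=> j; rewrite /fatt /q /K /blk5.
  have -> : row_mx (row_mx (0 : 'rV[rat]_dh) (0 : 'rV[rat]_db)) (0 : 'rV[rat]_dh) = 0.
    by rewrite !row_mx0.
  rewrite /dotv !tr_row_mx !mul_row_col trmx0 mulmx0 add0r (@tr_row_mx _ 1 1 1) (@mul_row_col _ 1 1 1 1) !tr_scalar_mx !mul_scalar_mx !scale_scalar_mx !mxE /=.
  congr (- `|_|).
  rewrite -natr1; lra.
have hj0 : (j0 : nat) = (minn t.+1 n).-1 by [].
have key : forall j : 'I_n, j != j0 -> `|j0%:R - t%:R| < `|j%:R - t%:R :> rat|.
  move=> j hj; rewrite hj0.
  have jn := ltn_ord j.
  case: (ltnP t n) => htn.
    have -> : (minn t.+1 n).-1 = t by lia.
    rewrite subrr normr0 normr_gt0 subr_eq0 eqr_nat.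
    by apply: contra hj => /eqP hjt; apply/eqP/val_inj; rewrite /= hjt; lia.
  have hm : (minn t.+1 n).-1 = n.-1 by lia.
  rewrite hm.
  have hjl : (j < n.-1)%N.
    rewrite ltn_neqAle -ltnS prednK // jn andbT.
    by apply: contra hj => /eqP hjt; apply/eqP/val_inj; rewrite /= hjt; lia.
  have h1 : (j%:R : rat) < n.-1%:R by rewrite ltr_nat.
  have h2 : (n.-1%:R : rat) <= t%:R by rewrite ler_nat (leq_trans (leq_pred n)).
  rewrite !ler0_norm; try lra.
have hA : argmax_set (fun j => fatt q (K j)) = [set j0].
  apply/setP => j; rewrite !inE; apply/forallP/eqP.
    move=> H; apply/eqP; apply: contraT => hj.
    have := H j0; rewrite !hf; have := key j hj; lra.
  move=> -> k; rewrite !hf; case: (eqVneq k j0) => [->//|hk].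
  have := key k hk; lra.
rewrite /Att (bigD1 j0) //= big1 ?addr0.
  by rewrite /hardmax hA set11 cards1 invr1 scale1r.
move=> j hj; rewrite /hardmax hA inE (negbTE hj) scale0r //.
Qed.
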